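(* Let $d$ be a metric on $\mathbb R^n$ induced by a norm, let $\{\mathbb R^n;w_1,\dots,w_N;p_1,\dots,p_N\}$ be a hyperbolic IFS (contractions $w_i$ on $(\mathbb R^n,d)$, constant probabilities $p_i\in(0,1]$, $\sum_ip_i=1$) with attractor $A_\infty$. For $\delta>0$ let $\{\mathcal D^n(\delta);\tilde w_1,\dots,\tilde w_N;p_1,\dots,p_N\}$ be the DIFS with the same constant probabilities, where $\tilde w_i$ is the $\delta$-roundoff of $w_i$, and let $\mathcal A_{\mathcal F}(\delta)$ be the family of all positive recurrent communication classes of its associated Markov chain. Then $$\lim_{\delta\to0}\mathcal A_k^+(\delta)=A_\infty$$ in the Hausdorff metric induced by $d$, where for each $\delta$, $\mathcal A_k^+(\delta)$ is any set from $\mathcal A_{\mathcal F}(\delta)$.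
   Context: For $m\in\mathbb Z^n$, $C_\delta(m)=\prod_{j=1}^n[(m_j-\tfrac12)\delta,(m_j+\tfrac12)\delta)$; $\mathcal D^n(\delta)=\{\delta m:m\in\mathbb Z^n\}\subset\mathbb R^n$. The $\delta$-roundoff of $x$ is $\tilde x=\delta m$ where $x\in C_\delta(m)$; the $\delta$-roundoff of $w$ is $\tilde w(\tilde x)=\widetilde{w(\tilde x)}$ on $\mathcal D^n(\delta)$. The attractor of the hyperbolic IFS is the unique nonempty compact $A_\infty$ with $A_\infty=\bigcup_iw_i(A_\infty)$. The associated Markov chain of the DIFS has transition probabilities $P(\tilde x,\tilde y)=\sum_ip_i\mathbf 1_{\{\tilde y\}}(\tilde w_i(\tilde x))$ on $\mathcal D^n(\delta)$. Accessibility: $P^k(\tilde x,\tilde y)>0$ for some $k\ge1$; a communication class is a maximal nonempty set of mutually accessible states; a state is positive recurrent if the chain started there returns a.s. with finite expected return time; a positive recurrent communication class is a communication class of positive recurrent states. *)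

(* Defs.v *)
From HB Require Import structures.
From mathcomp Require Import all_boot all_order all_algebra.
From mathcomp Require Import all_classical all_reals all_analysis.
Set Implicit Arguments. Unset Strict Implicit. Unset Printing Implicit Defensive.
Import Order.TTheory GRing.Theory Num.Theory.
Local Open Scope classical_set_scope.
Local Open Scope ring_scope.

Section IFSDefs.
Variables (R : realType) (n N : nat).
Local Notation V := 'rV[R]_n.

Definition is_norm (nrm : V -> R) : Prop :=
  [/\ forall x, 0 <= nrm x,
      forall x, nrm x = 0 -> x = 0,
      forall (a : R) x, nrm (a *: x) = `|a| * nrm x
    & forall x y, nrm (x + y) <= nrm x + nrm y].

Definition ndist (nrm : V -> R) (x y : V) : R := nrm (x - y).

Definition ifs_contraction (nrm : V -> R) (f : V -> V) : Prop :=
  exists2 s : R, (0 <= s) && (s < 1) &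
    forall x y, ndist nrm (f x) (f y) <= s * ndist nrm x y.

Definition dopen (nrm : V -> R) (U : set V) : Prop :=
  forall x, U x -> exists2 r : R, 0 < r & [set y | ndist nrm x y < r] `<=` U.

Definition dcompact (nrm : V -> R) (A : set V) : Prop :=
  forall F : set (set V), (forall U, F U -> dopen nrm U) ->
    A `<=` \bigcup_(U in F) U ->
    exists s : seq (set V), (forall U, U \in s -> F U) /\
      A `<=` \bigcup_(U in [set U | U \in s]) U.

Definition is_attractor (nrm : V -> R) (w : 'I_N -> V -> V) (A : set V) : Prop :=
  [/\ A !=set0, dcompact nrm A & A = \bigcup_(i in [set: 'I_N]) (w i @` A)].

Definition roundoff (delta : R) (x : V) : V :=
  \row_j (delta * (Num.floor (x ord0 j / delta + 2^-1))%:~R).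

Definition lattice_pts (delta : R) : set V :=
  [set x | exists m : 'rV[int]_n, x = \row_j (delta * (m ord0 j)%:~R)].

Definition difs_maps (delta : R) (w : 'I_N -> V -> V) : 'I_N -> V -> V :=
  fun i x => roundoff delta (w i x).

(* Markov chain associated with maps f and probabilities p:
   P(x,y) = \sum_i p_i 1_{y}(f_i x).  k-step transition probability,
   computed by first-step decomposition (Chapman-Kolmogorov). *)
Fixpoint Pk (p : 'I_N -> R) (f : 'I_N -> V -> V) (k : nat) (x y : V) : R :=
  match k with
  | 0 => (x == y)%:R
  | k'.+1 => \sum_(i < N) p i * Pk p f k' (f i x) y
  end.

Definition ifs_trans (p : 'I_N -> R) (f : 'I_N -> V -> V) (x y : V) : R :=
  \sum_(i < N) p i * (f i x == y)%:R.

(* first-passage probabilities: fpt k x y = P_x(first visit to y at time k >= 1) *)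
Fixpoint fpt (p : 'I_N -> R) (f : 'I_N -> V -> V) (k : nat) (x y : V) : R :=
  match k with
  | 0 => 0
  | k'.+1 => \sum_(i < N) p i *
       (if f i x == y then (k' == 0%N)%:R else fpt p f k' (f i x) y)
  end.

Definition accessible p f (x y : V) : Prop :=
  exists2 k : nat, (0 < k)%N & 0 < Pk p f k x y.

Definition communicate p f (x y : V) : Prop :=
  accessible p f x y /\ accessible p f y x.

Definition comm_class p f (S C : set V) : Prop :=
  [/\ C `<=` S, C !=set0,
      (forall x y, C x -> C y -> communicate p f x y)
    & forall D : set V, C `<=` D -> D `<=` S ->
        (forall x y, D x -> D y -> communicate p f x y) -> D = C].

Definition pos_recurrent p f (x : V) : Prop :=
  ((\sum_(k <oo) (fpt p f k x x)%:E = 1%:E) /\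
   (\sum_(k <oo) (k%:R * fpt p f k x x)%:E < +oo))%E.

Definition pos_rec_class p f (S C : set V) : Prop :=
  comm_class p f S C /\ forall x, C x -> pos_recurrent p f x.

Definition hausdorff_dist (nrm : V -> R) (A B : set V) : \bar R :=
  maxe (ereal_sup [set ereal_inf [set (ndist nrm x y)%:E | y in B] | x in A])
       (ereal_sup [set ereal_inf [set (ndist nrm x y)%:E | x in A] | y in B]).

End IFSDefs.

(* Main.v *)
Require Import Defs.
From HB Require Import structures.
From mathcomp Require Import all_boot all_order all_algebra.
From mathcomp Require Import all_classical all_reals all_analysis.
From mathcomp Require Import ring lra.
Import Order.TTheory GRing.Theory Num.Theory.
Local Open Scope classical_set_scope.
Local Open Scope ring_scope.

Section Chain.
Variables (R : realType) (n N : nat).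
Local Notation V := 'rV[R]_n.
Variables (p : 'I_N -> R) (f : 'I_N -> V -> V).
Hypothesis p_gt0 : forall i, 0 < p i.

Definition wapp (s : seq 'I_N) (x : V) := foldl (fun y i => f i y) x s.

Lemma wapp_cat s t x : wapp (s ++ t) x = wapp t (wapp s x).
Proof. by rewrite /wapp foldl_cat. Qed.

Lemma Pk_ge0 k x y : 0 <= Pk p f k x y.
Proof.
elim: k x => [|k IH] x /=; first by case: (x == y).
by apply: sumr_ge0 => i _; rewrite mulr_ge0 // ltW.
Qed.

Lemma Pk_pos k x y : 0 < Pk p f k x y <-> exists s, size s = k /\ wapp s x = y.
Proof.
elim: k x => [|k IH] x /=.
  split; first by case: eqP => [->|]; [exists [::] | rewrite ltxx].
  by case=> s [hs ws]; case: s hs ws => [|//] _ /= ->; rewrite eqxx ltr01.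
split.
  move=> H; have /existsP [i Hi] : [exists i, 0 < p i * Pk p f k (f i x) y].
    apply: contraT; rewrite negb_exists => /forallP Hn.
    move: H; rewrite ltNge => /negP H; exfalso; apply: H.
    by apply: sumr_le0 => i _; have := Hn i; rewrite -leNgt.
  have : 0 < Pk p f k (f i x) y by rewrite -(pmulr_rgt0 _ (p_gt0 i)).
  by case/IH => s [hs ws]; exists (i :: s); rewrite /= hs.
case=> s [hs ws]; case: s hs ws => [//|i s] /= [hs] ws.
have Hp : 0 < Pk p f k (f i x) y by apply/IH; exists s.
rewrite (bigD1 i) //=; apply: ltr_pwDl; first by rewrite mulr_gt0.
by apply: sumr_ge0 => j _; rewrite mulr_ge0 ?Pk_ge0 // ltW.
Qed.

Lemma accP x y : accessible p f x y <-> exists s, (0 < size s)%N /\ wapp s x = y.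
Proof.
split.
  by case=> k k0 /Pk_pos [s [hs ws]]; exists s; rewrite hs.
by case=> s [s0 ws]; exists (size s) => //; apply/Pk_pos; exists s.
Qed.


Hypothesis p_sum : \sum_(i < N) p i = 1.
Hypothesis p_le1 : forall i, p i <= 1.

Lemma fpt_ge0 k z y : 0 <= fpt p f k z y.
Proof.
elim: k z => [|k IH] z //=.
apply: sumr_ge0 => i _; apply: mulr_ge0; first exact: ltW.
by case: (f i z == y) => //; case: (k == 0)%N.
Qed.

Section Ret.
Variable x : V.
Definition Sf K z := \sum_(k < K) fpt p f k.+1 z x.
Definition uf K z := if z == x then 1 else Sf K z.

Lemma Sf_rec K z : Sf K.+1 z = \sum_(i < N) p i * uf K (f i z).
Proof.
rewrite /Sf /=.
rewrite exchange_big /=; apply: eq_bigr => i _.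
rewrite -mulr_sumr /uf; congr (_ * _).
case: (f i z == x).
  by rewrite big_ord_recl /= big1 ?addr0.
by rewrite big_ord_recl /= add0r.
Qed.

Lemma uf_bnd K z : 0 <= uf K z <= 1.
Proof.
rewrite /uf; case: (z == x); first by rewrite ler01 lexx.
elim: K z => [|K IH] z; first by rewrite /Sf big_ord0 lexx ler01.
rewrite Sf_rec; apply/andP; split.
  apply: sumr_ge0 => i _; apply: mulr_ge0; first exact: ltW.
  by rewrite /uf; case: ifP => _ //; case/andP: (IH (f i z)).
rewrite -p_sum; apply: ler_sum => i _; apply: ler_piMr; first exact: ltW.
by rewrite /uf; case: ifP => _ //; case/andP: (IH (f i z)).
Qed.

Lemma Sf_T K z : (forall s, wapp s z != x) -> Sf K z = 0.
Proof.
elim: K z => [|K IH] z Hz; first by rewrite /Sf big_ord0.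
rewrite Sf_rec big1 // => i _.
have -> : uf K (f i z) = 0.
  rewrite /uf (negbTE (Hz [:: i])) IH // => s.
  exact: (Hz (i :: s)).
by rewrite mulr0.
Qed.

Lemma recurrent_return i : pos_recurrent p f x -> exists s, wapp s (f i x) = x.
Proof.
case=> H1 _; apply: contrapT => Hn.
have T : forall s, wapp s (f i x) != x.
  by move=> s; apply/eqP => E; apply: Hn; exists s.
have HS : forall K, Sf K x <= 1 - p i.
  case=> [|K]; first by rewrite /Sf big_ord0 subr_ge0.
  rewrite Sf_rec (bigD1 i) //=.
  have -> : uf K (f i x) = 0 by rewrite /uf (negbTE (T [::])) Sf_T.
  rewrite mulr0 add0r.
  have -> : 1 - p i = \sum_(j < N | j != i) p j.
    by rewrite -p_sum (bigD1 i) //= addrC addrK.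
  apply: ler_sum => j _; apply: ler_piMr; first exact: ltW.
  by case/andP: (uf_bnd K (f j x)).
have : (\sum_(k <oo) (fpt p f k x x)%:E <= (1 - p i)%:E)%E.
  apply: lime_le.
    by apply: is_cvg_nneseries => k _ _; rewrite lee_fin fpt_ge0.
  have HP : forall K, \sum_(0 <= k < K) fpt p f k x x <= 1 - p i.
    case=> [|K]; first by rewrite big_geq // subr_ge0.
    rewrite big_mkord big_ord_recl /= add0r; exact: HS.
  by near=> K; rewrite sumEFin lee_fin.
rewrite H1 lee_fin; have := p_gt0 i; lra.
Unshelve. all: by end_near.
Qed.
End Ret.

Lemma acc_trans a b c : accessible p f a b -> accessible p f b c -> accessible p f a c.
Proof.
move=> /accP [s [s0 ws]] /accP [t [t0 wt]]; apply/accP; exists (s ++ t).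
by rewrite size_cat addn_gt0 s0 wapp_cat ws.
Qed.

Lemma class_closed S C x i : pos_rec_class p f S C -> C x -> S (f i x) -> C (f i x).
Proof.
case=> -[CS Cne Ccomm Cmax] Crec Cx Sy.
have [s1 ws1] := recurrent_return x i (Crec x Cx).
have axy : accessible p f x (f i x) by apply/accP; exists [:: i].
have ayx : accessible p f (f i x) x.
  apply/accP; exists (s1 ++ [:: i] ++ s1); split.
    by rewrite !size_cat /= addnS.
  by rewrite !wapp_cat ws1 /= ws1.
have key : forall a, (C `|` [set f i x]) a -> accessible p f a x /\ accessible p f x a.
  move=> a [Ca|->]; last by [].
  by have [] := Ccomm a x Ca Cx.
suff <- : C `|` [set f i x] = C by right.
apply: Cmax; first by move=> a Ca; left.
  by move=> a [Ca|->]; [exact: CS|].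
move=> a b Da Db; have [a1 a2] := key a Da; have [b1 b2] := key b Db.
by split; apply: acc_trans; eauto.
Qed.

End Chain.
Arguments wapp {R n N}.
Section Geo.
Variables (R : realType) (n : nat).
Local Notation V := 'rV[R]_n.
Variable nrm : V -> R.
Hypothesis Hn : is_norm nrm.

Lemma nrm_ge0 v : 0 <= nrm v. Proof. by case: Hn. Qed.
Lemma nrm_tri u v : nrm (u + v) <= nrm u + nrm v. Proof. by case: Hn. Qed.
Lemma nrmZ a v : nrm (a *: v) = `|a| * nrm v. Proof. by case: Hn. Qed.
Lemma nrm0 : nrm 0 = 0.
Proof. by rewrite -(scale0r (0 : V)) nrmZ normr0 mul0r. Qed.
Lemma nrmN v : nrm (- v) = nrm v.
Proof. by rewrite -scaleN1r nrmZ normrN normr1 mul1r. Qed.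
Lemma nrm_sym u v : nrm (u - v) = nrm (v - u).
Proof. by rewrite -nrmN opprB. Qed.
Lemma nrm_tri3 u v w : nrm (u - w) <= nrm (u - v) + nrm (v - w).
Proof. by have := nrm_tri (u - v) (v - w); rewrite addrA subrK. Qed.

Lemma nrm_sum m (F : 'I_m -> V) : nrm (\sum_(j < m) F j) <= \sum_(j < m) nrm (F j).
Proof.
elim/big_ind2: _ => //; first by rewrite nrm0.
by move=> a b c d h1 h2; apply: le_trans (nrm_tri _ _) _; apply: lerD.
Qed.

Definition cst_r := \sum_(j < n) nrm (delta_mx 0 j).

Lemma roundoff_err delta v : 0 < delta -> nrm (roundoff delta v - v) <= cst_r * delta.
Proof.
move=> d0.
rewrite [roundoff delta v - v]row_sum_delta. apply: le_trans (nrm_sum _ _) _.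
rewrite /cst_r mulr_suml; apply: ler_sum => j _; rewrite nrmZ mulrC.
apply: ler_wpM2l; first exact: nrm_ge0.
rewrite !mxE; set u := v 0 j / delta + 2^-1.
have hv : v 0 j = delta * u - delta / 2.
  rewrite /u mulrDr mulrCA divff ?mulr1; last by rewrite gt_eqF.
  by rewrite addrK.
have := floor_itv u; move: (Num.floor u) => F /andP[F1 F2].
rewrite intrD in F2.
have h1 : delta * F%:~R <= delta * u by rewrite ler_wpM2l // ltW.
have h2 : delta * u < delta * F%:~R + delta.
  have : delta * u < delta * (F%:~R + 1) by rewrite ltr_pM2l.
  by rewrite [delta * (_ + 1)]mulrDr mulr1.
rewrite ler_norml; apply/andP; split; rewrite ?hv; lra.
Qed.


Variable N : nat.

Lemma word_contr (w ft : 'I_N -> V -> V) (s0 E B : R) : 0 <= s0 ->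
  (forall i x y, nrm (w i x - w i y) <= s0 * nrm (x - y)) ->
  (forall i x, nrm (ft i x - w i x) <= E) -> E + s0 * B <= B ->
  forall s x b, nrm (wapp ft s x - wapp w s b) <=
     s0 ^+ (size s) * nrm (x - b) + (1 - s0 ^+ (size s)) * B.
Proof.
move=> s00 Hw Hft HB; elim=> [|i s IH] x b /=.
  by rewrite expr0 mul1r subrr mul0r addr0.
apply: le_trans (IH _ _) _.
have h1 : nrm (ft i x - w i b) <= E + s0 * nrm (x - b).
  apply: le_trans (nrm_tri3 _ (w i x) _) _; apply: lerD; [exact: Hft | exact: Hw].
have t0 : 0 <= s0 ^+ size s by rewrite exprn_ge0.
have := ler_wpM2l t0 h1; rewrite exprS.
set t := s0 ^+ size s; set d := nrm (x - b).
move=> h2.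
have h3 : t * (E + s0 * B - B) <= 0 by rewrite mulr_ge0_le0 // subr_le0.
have d0 : 0 <= d by exact: nrm_ge0.
nra.
Qed.

Section Attr.
Variables (w : 'I_N -> V -> V) (A : set V).
Hypothesis HA : A = \bigcup_(i in [set: 'I_N]) (w i @` A).

Lemma attr_fwd i a : A a -> A (w i a).
Proof. by move=> Aa; rewrite HA; exists i => //; exists a. Qed.

Lemma attr_wapp s a : A a -> A (wapp w s a).
Proof. by elim: s a => [|i s IH] a //= Aa; apply: IH; apply: attr_fwd. Qed.

Lemma attr_back L a : A a -> exists s, size s = L /\ exists2 a', A a' & wapp w s a' = a.
Proof.
elim: L a => [|L IH] a Aa; first by exists [::]; split => //; exists a.
move: (Aa); rewrite {1}HA => -[i _ [a1 Aa1 <-]].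
have [s [hs [a' Aa' ws]]] := IH a1 Aa1.
exists (rcons s i); split; first by rewrite size_rcons hs.
by exists a' => //; rewrite /wapp foldl_rcons -/(wapp w s a') ws.
Qed.
End Attr.

Lemma compact_bounded (A : set V) a0 : dcompact nrm A ->
  exists K : nat, forall a, A a -> nrm (a0 - a) < K%:R.
Proof.
move=> HC.
pose F := [set U : set V | exists k : nat, U = [set y | nrm (a0 - y) < k%:R]].
have [||s [sF cov]] := HC F.
- move=> U [k ->] x /= hx; exists (k%:R - nrm (a0 - x)); first by rewrite subr_gt0.
  move=> y /= hy; rewrite /ndist in hy.
  apply: le_lt_trans (nrm_tri3 _ x _) _; lra.
- move=> a Aa; exists [set y | nrm (a0 - y) < (Num.bound (nrm (a0 - a)))%:R].
    by exists (Num.bound (nrm (a0 - a))).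
  by rewrite /=; apply: archi_boundP; exact: nrm_ge0.
have [K HK] : exists K : nat, forall U, U \in s -> forall y, U y -> nrm (a0 - y) < K%:R.
  elim: s sF {cov} => [|U s IH] sF; first by exists 0%N.
  have [|K HK] := IH; first by move=> V0 hV; apply: sF; rewrite in_cons hV orbT.
  have [k Uk] : F U by apply: sF; rewrite in_cons eqxx.
  exists (maxn k K) => U' /[1!in_cons] /orP[/eqP ->|hU] y hy.
    rewrite Uk /= in hy; apply: lt_le_trans hy _; rewrite ler_nat; exact: leq_maxl.
  apply: lt_le_trans (HK _ hU _ hy) _; rewrite ler_nat; exact: leq_maxr.
exists K => a Aa; have [U Us Ua] := cov a Aa; exact: HK Us _ Ua.
Qed.

End Geo.

Lemma small_pow (R : realType) (s e : R) : 0 <= s < 1 -> 0 < e -> exists m : nat, s ^+ m < e.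
Proof.
move=> /andP[s0 s1] e0.
have hs : `|s| < 1 by rewrite ger0_norm.
have := cvgr0_norm_lt _ (cvg_expr hs) _ e0.
case=> M _ HM; exists M; have := HM M (leqnn M) => /=.
by rewrite ger0_norm // exprn_ge0.
Qed.

Lemma small_pow2 (R : realType) (s D e : R) : 0 <= s < 1 -> 0 <= D -> 0 < e ->
  exists m : nat, forall L, (m <= L)%N -> s ^+ L * D < e.
Proof.
move=> hs D0 e0; have /andP[s0 s1] := hs.
have eD : 0 < e / (D + 1) by rewrite divr_gt0 // ltr_wpDl.
have [m hm] := small_pow _ _ _ hs eD.
exists m => L mL.
have h1 : s ^+ L <= s ^+ m by apply: ler_wiXn2l => //; exact: ltW.
have h2 : s ^+ m * (D + 1) < e by rewrite -ltr_pdivlMr // ltr_wpDl.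
have h3 : 0 <= s ^+ L by rewrite exprn_ge0.
nra.
Qed.


Lemma common_contr (R : realType) (n N : nat) (nrm : 'rV[R]_n -> R)
  (w : 'I_N -> 'rV[R]_n -> 'rV[R]_n) : is_norm nrm ->
  (forall i, ifs_contraction nrm (w i)) ->
  exists s0 : R, (0 <= s0 < 1) /\
    forall i x y, nrm (w i x - w i y) <= s0 * nrm (x - y).
Proof.
move=> Hn Hc.
suff : forall l : seq 'I_N, exists s0 : R, (0 <= s0 < 1) /\
    forall i, i \in l -> forall x y, nrm (w i x - w i y) <= s0 * nrm (x - y).
  case/(_ (enum 'I_N)) => s0 [h1 h2]; exists s0; split => // i.
  by apply: h2; rewrite mem_enum.
elim=> [|i l [s0 [/andP [s00 s01] h]]]; first by exists 0; rewrite lexx ltr01.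
have [si /andP [si0 si1] hi] := Hc i.
exists (si + s0 - si * s0); split.
  apply/andP; split; nra.
have hm1 : si <= si + s0 - si * s0 by nra.
have hm2 : s0 <= si + s0 - si * s0 by nra.
move=> j; rewrite in_cons => /orP [/eqP -> | jl] x y.
  apply: le_trans (hi x y) _; rewrite /ndist; apply: ler_wpM2r => //.
  exact: (nrm_ge0 _ _ _ Hn).
apply: le_trans (h j jl x y) _; apply: ler_wpM2r => //.
exact: (nrm_ge0 _ _ _ Hn).
Qed.

Theorem corollary8 (R : realType) (n N : nat) (nrm : 'rV[R]_n -> R)
    (w : 'I_N -> 'rV[R]_n -> 'rV[R]_n) (p : 'I_N -> R) (A : set 'rV[R]_n) :
  is_norm nrm ->
  (forall i, ifs_contraction nrm (w i)) ->
  (forall i, 0 < p i <= 1) ->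
  \sum_(i < N) p i = 1 ->
  is_attractor nrm w A ->
  forall eps : R, 0 < eps ->
  exists2 delta0 : R, 0 < delta0 &
    forall delta : R, 0 < delta < delta0 ->
    forall C : set 'rV[R]_n,
      pos_rec_class p (difs_maps delta w) (lattice_pts delta) C ->
      (hausdorff_dist nrm C A < eps%:E)%E.
Proof.
move=> Hn Hc Hp Hsum [Ane Acomp Aeq] eps e0.
have [s0 [/andP[s00 s01] Hs]] := common_contr _ _ _ _ _ Hn Hc.
have cr0 : 0 <= @cst_r _ _ nrm.
  by apply: sumr_ge0 => j _; exact: (nrm_ge0 _ _ _ Hn).
set c := @cst_r _ _ nrm + 1.
have c0 : 0 < c by rewrite /c; lra.
have s1 : 0 < 1 - s0 by lra.
exists (eps * (1 - s0) / (4 * c)).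
  by rewrite divr_gt0 ?mulr_gt0 //; lra.
move=> delta /andP[d0 dlt] C HC.
have hp0 : forall i, 0 < p i by move=> i; case/andP: (Hp i).
have hp1 : forall i, p i <= 1 by move=> i; case/andP: (Hp i).
set ft := difs_maps delta w.
set E := c * delta.
set B := E / (1 - s0).
have E0 : 0 <= E by rewrite /E mulr_ge0 // ltW.
have B0 : 0 <= B by rewrite /B divr_ge0 // ltW.
have HB : E + s0 * B <= B.
  rewrite le_eqVlt; apply/orP; left; apply/eqP.
  rewrite /B; field; lra.
have Beps : B < eps / 4.
  rewrite /B ltr_pdivrMr // /E.
  have : c * delta < c * (eps * (1 - s0) / (4 * c)) by rewrite ltr_pM2l.
  have -> : c * (eps * (1 - s0) / (4 * c)) = eps / 4 * (1 - s0).
    by field; lra.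
  by [].
have Hft : forall i x, nrm (ft i x - w i x) <= E.
  move=> i x; rewrite /ft /difs_maps.
  apply: le_trans (roundoff_err _ _ _ Hn _ _ d0) _.
  rewrite /E ler_wpM2r ?ltW // /c; lra.
have WC := @word_contr _ _ nrm Hn _ w ft s0 E B s00 Hs Hft HB.
have Wc : forall s x b, nrm (wapp ft s x - wapp w s b) <= s0 ^+ size s * nrm (x - b) + B.
  move=> s x b; apply: le_trans (WC s x b) _; rewrite lerD2l.
  have : 0 <= s0 ^+ size s by rewrite exprn_ge0.
  nra.
case: (HC) => -[CS Cne Ccomm Cmax] _.
have Cclosed : forall s x, C x -> C (wapp ft s x).
  elim=> [|i s IH] x Cx //=; apply: IH.
  apply: (class_closed _ _ _ _ _ hp0 Hsum hp1 _ _ _ _ HC Cx).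
  exists (\row_j Num.floor (w i x ord0 j / delta + 2^-1)).
  by apply/rowP => j; rewrite /ft /difs_maps /roundoff !mxE.
rewrite /hausdorff_dist gt_max; apply/andP; split.
- apply: (@le_lt_trans _ _ (eps / 2)%:E); last by rewrite lte_fin; lra.
  apply: ge_ereal_sup => _ [x Cx <-].
  have [s1' [s1p ws1]] : exists s, (0 < size s)%N /\ wapp ft s x = x.
    by apply/(accP _ _ _ p ft hp0); case: (Ccomm x x Cx).
  have hs : 0 <= s0 < 1 by rewrite s00 s01.
  have e4 : 0 < eps / 4 by lra.
  have [b Ab] := Ane.
  have [m Hm] := small_pow2 _ _ _ _ hs (nrm_ge0 _ _ _ Hn (x - b)) e4.
  pose sm := flatten (nseq m s1').
  have wsm : wapp ft sm x = x.
    rewrite /sm; elim: (m) => [|k IH] //=.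
    by rewrite wapp_cat ws1 IH.
  have szm : (m <= size sm)%N.
    rewrite /sm; elim: (m) => [|k IH] //=.
    rewrite size_cat; apply: leq_ltn_trans IH _; rewrite -addn1 addnC leq_add2r //.
  have hb := attr_wapp _ _ _ _ _ Aeq sm _ Ab.
  have := @ereal_inf_lbound _ [set (ndist nrm x y)%:E | y in A]
    (ndist nrm x (wapp w sm b))%:E (ex_intro2 _ _ (wapp w sm b) hb erefl).
  move/le_trans; apply; rewrite lee_fin /ndist.
  rewrite -{1}wsm; apply: le_trans (Wc _ _ _) _.
  have := Hm _ szm; lra.
- apply: (@le_lt_trans _ _ (eps / 2)%:E); last by rewrite lte_fin; lra.
  apply: ge_ereal_sup => _ [a Aa <-].
  have [x0 Cx0] := Cne.
  have hs : 0 <= s0 < 1 by rewrite s00 s01.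
  have e4 : 0 < eps / 4 by lra.
  have [b0 Ab0] := Ane.
  have [K HK] := compact_bounded _ _ _ Hn _ b0 Acomp.
  have D0 : 0 <= nrm (x0 - b0) + K%:R.
    by rewrite addr_ge0 // (nrm_ge0 _ _ _ Hn).
  have [m Hm] := small_pow2 _ _ _ _ hs D0 e4.
  have [s [hs' [a' Aa' wa]]] := attr_back _ _ _ _ _ Aeq m a Aa.
  have Cy := Cclosed s x0 Cx0.
  have := @ereal_inf_lbound _ [set (ndist nrm x a)%:E | x in C]
    (ndist nrm (wapp ft s x0) a)%:E (ex_intro2 _ _ (wapp ft s x0) Cy erefl).
  move/le_trans; apply; rewrite lee_fin /ndist.
  rewrite -wa; apply: le_trans (Wc _ _ _) _.
  have hd : nrm (x0 - a') <= nrm (x0 - b0) + K%:R.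
    apply: le_trans (nrm_tri3 _ _ _ Hn _ b0 _) _; rewrite lerD2l; apply: ltW; exact: HK.
  have t0 : 0 <= s0 ^+ size s by rewrite exprn_ge0.
  have := ler_wpM2l t0 hd.
  have := Hm (size s) (eq_leq (esym hs')).
  lra.
Qed.
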